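(* Let $E\to M$ be a vector bundle with nondegenerate symmetric fiber metric $h$ and metric connection $\nabla$, and consider the Rothstein–Poisson bracket on $\Gamma^\infty(\bigwedge^\bullet\tau^\sharp E)$. Let $u_1,\dots,u_K$ be a local frame of $E$ such that the functions $h_{AB}=h(u_A,u_B)$ are constant, and define the local sections $$r_i=p_i-\tfrac12\tau^\sharp\big(h^{AB}\Gamma^C_{iA}u_B\wedge u_C\big).$$ Then $\{q^i,r_j\}=\delta^i_j$, $\{\tau^\sharp u_A,\tau^\sharp u_B\}=h_{AB}$, and $\{q^i,q^j\}=\{q^i,\tau^\sharp u_A\}=\{r_i,r_j\}=\{r_i,\tau^\sharp u_A\}=0$.
   Context: $\tau:T^\ast M\to M$ is the cotangent projection, $(q^i,p_i)$ the bundle coordinates on $T^\ast M$ induced by local coordinates $x^i$ on $M$, $\tau^\sharp E$ the pullback bundle with pullback connection $\tau^\sharp\nabla$, and $\tau^\sharp u_A$ the pullback frame. $(h^{AB})$ is the inverse matrix of $(h_{AB})$, $\Gamma^B_{iA}$ the Christoffel symbols ($\nabla_{\partial/\partial x^i}u_A=\Gamma^B_{iA}u_B$), $R^C_{Aij}$ the curvature components ($R(\partial_i,\partial_j)u_A=R^C_{Aij}u_C$), $u^A$ the dual frame. For $\sigma\in E^\ast$, $i(\sigma)$ is the left interior product on $\bigwedge^\bullet E$ and $j(\sigma)\psi=(-1)^{m-1}i(\sigma)\psi$ for $\psi$ of Grassmann degree $m$; $\partial\varphi/\partial p_i:=(\tau^\sharp\nabla)_{\partial/\partial p_i}\varphi$.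 The Rothstein–Poisson bracket is the super-Poisson bracket on $\Gamma^\infty(\bigwedge^\bullet\tau^\sharp E)$ (functions on $T^\ast M$ included in degree $0$) given locally by $\{\varphi,\psi\}=(\tau^\sharp\nabla)_{\partial/\partial q^i}\varphi\wedge\frac{\partial\psi}{\partial p_i}-\frac{\partial\varphi}{\partial p_i}\wedge(\tau^\sharp\nabla)_{\partial/\partial q^i}\psi-\frac12\tau^\sharp(h^{AB}R^C_{Aij}u_B\wedge u_C)\wedge\frac{\partial\varphi}{\partial p_i}\wedge\frac{\partial\psi}{\partial p_j}+h_{AB}\,j(u^A)\varphi\wedge i(u^B)\psi$. *)

(* Defs.v *)
From HB Require Import structures.
From mathcomp Require Import all_boot all_order all_algebra.
From mathcomp Require Import all_classical all_reals all_analysis.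
Set Implicit Arguments. Unset Strict Implicit. Unset Printing Implicit Defensive.
Import Order.TTheory GRing.Theory Num.Theory.
Import numFieldNormedType.Exports.
Local Open Scope ring_scope.

Section Rothstein.
Variables (R : realType) (n K : nat).

(* Fibre of the exterior algebra bundle: /\^. R^K, an element being the
   family of its coefficients on the basis u_S = u_{s1} /\ ... /\ u_{sk},
   S = {s1 < ... < sk}. *)
Definition Grass := {ffun {set 'I_K} -> R}.

Definition blade (S : {set 'I_K}) : Grass := [ffun T : {set 'I_K} => (T == S)%:R].

Definition scal (c : R) : Grass := c *: blade finset.set0.

(* sign of u_S /\ u_T = sgn * u_(S u T) for disjoint S, T *)
Definition wsign (S T : {set 'I_K}) : R :=
  (-1) ^+ #|[set x : 'I_K * 'I_K | (x.1 \in S) && (x.2 \in T) && (x.2 < x.1)%N]|.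

Definition wedge (x y : Grass) : Grass :=
  [ffun W : {set 'I_K} => \sum_(S : {set 'I_K}) \sum_(T : {set 'I_K})
     (if (S :&: T == finset.set0) && (S :|: T == W) then wsign S T * x S * y T else 0)].

(* left interior product i(u^A) (u^A the dual frame) *)
Definition intl (A : 'I_K) (x : Grass) : Grass :=
  [ffun W : {set 'I_K} => if A \in W then 0
             else (-1) ^+ #|[set s in W | (s < A)%N]| * x (A |: W)].

(* j(u^A) psi = (-1)^(m-1) i(u^A) psi on degree m, extended linearly *)
Definition intj (A : 'I_K) (x : Grass) : Grass :=
  [ffun W : {set 'I_K} => (-1) ^+ #|W| * intl A x W].

(* derivation of /\^. R^K extending the endomorphism u_a |-> sum_b L a b u_b *)
Definition ext_der (L : 'I_K -> 'I_K -> R) (x : Grass) : Grass :=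
  \sum_(S : {set 'I_K}) x S *:
    \sum_(a in S) \sum_(b : 'I_K) L a b *:
       wedge (wedge (blade [set s in S | (s < a)%N]) (blade [set b]))
             (blade [set s in S | (a < s)%N]).

Definition ecoord (i : 'I_n) : 'rV[R]_n := delta_mx 0 i.

(* Christoffel symbols: Gam i A C q = Gamma^C_{iA}(q),
   i.e. nabla_{d/dx^i} u_A = sum_C Gamma^C_{iA} u_C *)
Definition chris := 'I_n -> 'I_K -> 'I_K -> 'rV[R]_n -> R.

Definition Esec := 'rV[R]_n -> 'I_K -> R.
Definition uE (A : 'I_K) : Esec := fun _ C => (A == C)%:R.
Definition nablaE (Gam : chris) (i : 'I_n) (s : Esec) : Esec :=
  fun q C => 'D_(ecoord i) (fun q' => s q' C) q + \sum_(A : 'I_K) s q A * Gam i A C q.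

(* curvature components: R(d_i, d_j) u_A = sum_C R^C_{Aij} u_C,
   R(X,Y) = [nabla_X, nabla_Y] - nabla_[X,Y], [d_i,d_j] = 0 *)
Definition curv (Gam : chris) (C A : 'I_K) (i j : 'I_n) (q : 'rV[R]_n) : R :=
  nablaE Gam i (nablaE Gam j (uE A)) q C - nablaE Gam j (nablaE Gam i (uE A)) q C.

(* local sections of /\^. tau^# E over T^*U, in bundle coordinates (q,p) *)
Definition Sec := 'rV[R]_n -> 'rV[R]_n -> Grass.

Definition nablaQ (Gam : chris) (i : 'I_n) (phi : Sec) : Sec :=
  fun q p => [ffun W : {set 'I_K} => 'D_(ecoord i) (fun q' => phi q' p W) q]
             + ext_der (fun a b => Gam i a b q) (phi q p).

Definition nablaP (i : 'I_n) (phi : Sec) : Sec :=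
  fun q p => [ffun W : {set 'I_K} => 'D_(ecoord i) (fun p' => phi q p' W) p].

(* Rothstein-Poisson bracket, local formula; h is the constant matrix (h_AB),
   invmx h = (h^AB) *)
Definition rbracket (h : 'M[R]_K) (Gam : chris) (phi psi : Sec) : Sec :=
  fun q p =>
    \sum_(i < n) (wedge (nablaQ Gam i phi q p) (nablaP i psi q p)
                  - wedge (nablaP i phi q p) (nablaQ Gam i psi q p))
    - (2%:R)^-1 *: \sum_(i < n) \sum_(j < n)
        wedge (wedge (\sum_(A : 'I_K) \sum_(B : 'I_K) \sum_(C : 'I_K)
                        (invmx h A B * curv Gam C A i j q)
                          *: wedge (blade [set B]) (blade [set C]))
                     (nablaP i phi q p))
              (nablaP j psi q p)
    + \sum_(A : 'I_K) \sum_(B : 'I_K) h A B *: wedge (intj A (phi q p)) (intl B (psi q p)).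

Definition qsec (i : 'I_n) : Sec := fun q _ => scal (q 0 i).
Definition usec (A : 'I_K) : Sec := fun _ _ => blade [set A].
Definition rsec (h : 'M[R]_K) (Gam : chris) (i : 'I_n) : Sec :=
  fun q p => scal (p 0 i)
    - (2%:R)^-1 *: \sum_(A : 'I_K) \sum_(B : 'I_K) \sum_(C : 'I_K)
         (invmx h A B * Gam i A C q) *: wedge (blade [set B]) (blade [set C]).
Definition csec (c : R) : Sec := fun _ _ => scal c.

(* nabla is metric for h, the frame having constant h_AB:
   0 = d_i h_AB = h(nabla_i u_A, u_B) + h(u_A, nabla_i u_B) *)
Definition metric_conn (U : set 'rV[R]_n) (h : 'M[R]_K) (Gam : chris) : Prop :=
  forall i A B q, U q ->
    \sum_(C : 'I_K) Gam i A C q * h C B + \sum_(C : 'I_K) Gam i B C q * h A C = 0.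

End Rothstein.

(* Main.v *)
Require Import Defs.
From HB Require Import structures.
From mathcomp Require Import all_boot all_order all_algebra.
From mathcomp Require Import all_classical all_reals all_analysis.
From mathcomp Require Import ring.
Import Order.TTheory GRing.Theory Num.Theory.
Import numFieldNormedType.Exports.
Local Open Scope ring_scope.
Set Implicit Arguments. Unset Strict Implicit. Unset Printing Implicit Defensive.
Lemma scaleRE {R : realType} (c x : R) : c *: x = c * x.
Proof. by []. Qed.

Lemma wedgeDl {R : realType} {K : nat} (x y z : Grass R K) :
  wedge (x + y) z = wedge x z + wedge y z.
Proof.
apply/ffunP => W; rewrite !ffunE -big_split /=; apply: eq_bigr => S _.
rewrite -big_split /=; apply: eq_bigr => T _; rewrite !ffunE.
by case: ifP => _; rewrite ?addr0 // mulrDr mulrDl.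
Qed.

Lemma wedgeDr {R : realType} {K : nat} (x y z : Grass R K) :
  wedge x (y + z) = wedge x y + wedge x z.
Proof.
apply/ffunP => W; rewrite !ffunE -big_split /=; apply: eq_bigr => S _.
rewrite -big_split /=; apply: eq_bigr => T _; rewrite !ffunE.
by case: ifP => _; rewrite ?addr0 // mulrDr.
Qed.

Lemma wedgeZl {R : realType} {K : nat} (c : R) (x y : Grass R K) :
  wedge (c *: x) y = c *: wedge x y.
Proof.
apply/ffunP => W; rewrite !ffunE scaleRE mulr_sumr; apply: eq_bigr => S _.
rewrite mulr_sumr; apply: eq_bigr => T _; rewrite !ffunE ?scaleRE.
by case: ifP => _; [ring | rewrite mulr0].
Qed.

Lemma wedgeZr {R : realType} {K : nat} (c : R) (x y : Grass R K) :
  wedge x (c *: y) = c *: wedge x y.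
Proof.
apply/ffunP => W; rewrite !ffunE scaleRE mulr_sumr; apply: eq_bigr => S _.
rewrite mulr_sumr; apply: eq_bigr => T _; rewrite !ffunE ?scaleRE.
by case: ifP => _; [ring | rewrite mulr0].
Qed.

Lemma wedge0l {R : realType} {K : nat} (y : Grass R K) : wedge 0 y = 0.
Proof. by have := wedgeZl 0 0 y; rewrite !scale0r. Qed.
Lemma wedge0r {R : realType} {K : nat} (y : Grass R K) : wedge y 0 = 0.
Proof. by have := wedgeZr 0 y 0; rewrite !scale0r. Qed.
Lemma wedgeNl {R : realType} {K : nat} (x y : Grass R K) : wedge (- x) y = - wedge x y.
Proof. by rewrite -scaleN1r wedgeZl scaleN1r. Qed.
Lemma wedgeNr {R : realType} {K : nat} (x y : Grass R K) : wedge x (- y) = - wedge x y.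
Proof. by rewrite -scaleN1r wedgeZr scaleN1r. Qed.
Lemma wedgeBl {R : realType} {K : nat} (x y z : Grass R K) :
  wedge (x - y) z = wedge x z - wedge y z.
Proof. by rewrite wedgeDl wedgeNl. Qed.
Lemma wedgeBr {R : realType} {K : nat} (x y z : Grass R K) :
  wedge x (y - z) = wedge x y - wedge x z.
Proof. by rewrite wedgeDr wedgeNr. Qed.

Lemma wedge_suml {R : realType} {K : nat} (I : Type) (r : seq I) (P : pred I)
  (F : I -> Grass R K) y :
  wedge (\sum_(i <- r | P i) F i) y = \sum_(i <- r | P i) wedge (F i) y.
Proof.
exact: (big_morph (fun x => wedge x y) (fun a b => wedgeDl a b y) (wedge0l y)).
Qed.
Lemma wedge_sumr {R : realType} {K : nat} (I : Type) (r : seq I) (P : pred I)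
  (F : I -> Grass R K) y :
  wedge y (\sum_(i <- r | P i) F i) = \sum_(i <- r | P i) wedge y (F i).
Proof.
exact: (big_morph (fun x => wedge y x) (fun a b => wedgeDr y a b) (wedge0r y)).
Qed.

Lemma sum_delta {R : realType} (T : finType) (a : T) (F : T -> R) :
  \sum_(t : T) F t * (t == a)%:R = F a.
Proof.
rewrite (bigD1 a) //= eqxx mulr1 big1 ?addr0 // => t /negbTE ->; by rewrite mulr0.
Qed.

Lemma wedge_blade {R : realType} {K : nat} (S T : {set 'I_K}) :
  wedge (blade R S) (blade R T) =
  if S :&: T == finset.set0 then wsign R S T *: blade R (S :|: T) else 0.
Proof.
apply/ffunP => W; rewrite !ffunE.
rewrite (bigD1 S) //= [X in _ + X = _]big1 ?addr0; last first.
  move=> S' nS; apply: big1 => T' _; rewrite !ffunE (negbTE nS).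
  by case: ifP; rewrite // mulr0 mul0r.
rewrite (bigD1 T) //= [X in _ + X = _]big1 ?addr0; last first.
  move=> T' nT; rewrite !ffunE (negbTE nT).
  by case: ifP; rewrite // mulr0.
rewrite !ffunE !eqxx !mulr1.
case: (S :&: T == finset.set0) => /=; last by rewrite ffunE.
by rewrite !ffunE scaleRE [W == _]eq_sym; case: (_ == W); rewrite ?mulr1 ?mulr0.
Qed.
Lemma grass_decomp {R : realType} {K : nat} (x : Grass R K) :
  x = \sum_(S : {set 'I_K}) x S *: blade R S.
Proof.
apply/ffunP => W; rewrite sum_ffunE.
rewrite (eq_bigr (fun S => x S * (S == W)%:R)) ?sum_delta // => S _.
by rewrite ffunE scaleRE ffunE eq_sym.
Qed.

Lemma wsign0l {R : realType} {K : nat} (T : {set 'I_K}) : wsign R finset.set0 T = 1.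
Proof.
rewrite /wsign (_ : [set _ | _] = finset.set0) ?cards0 ?expr0 //.
by apply/setP => -[a b]; rewrite !inE.
Qed.

Lemma wsign0r {R : realType} {K : nat} (T : {set 'I_K}) : wsign R T finset.set0 = 1.
Proof.
rewrite /wsign (_ : [set _ | _] = finset.set0) ?cards0 ?expr0 //.
by apply/setP => -[a b]; rewrite !inE andbF.
Qed.

Lemma wsign11 {R : realType} {K : nat} (B C : 'I_K) :
  wsign R [set B] [set C] = if (C < B)%N then -1 else 1.
Proof.
rewrite /wsign; case: ltnP => h.
  rewrite (_ : [set _ | _] = [set (B, C)]) ?cards1 ?expr1 //.
  apply/setP => -[a b]; rewrite !inE xpair_eqE /=.
  case: (a =P B) => [->|] //=.
  by case: (b =P C) => [->|] //=; rewrite h.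
rewrite (_ : [set _ | _] = finset.set0) ?cards0 ?expr0 //.
apply/setP => -[a b]; rewrite !inE /=.
case: (a =P B) => [->|] //=; case: (b =P C) => [->|] //=.
by rewrite ltnNge h.
Qed.

Lemma wedge_blade0l {R : realType} {K : nat} (x : Grass R K) :
  wedge (blade R finset.set0) x = x.
Proof.
rewrite [in LHS](grass_decomp x) wedge_sumr [in RHS](grass_decomp x).
apply: eq_bigr => S _; rewrite wedgeZr wedge_blade finset.set0I eqxx wsign0l finset.set0U scale1r.
by [].
Qed.

Lemma wedge_blade0r {R : realType} {K : nat} (x : Grass R K) :
  wedge x (blade R finset.set0) = x.
Proof.
rewrite [in LHS](grass_decomp x) wedge_suml [in RHS](grass_decomp x).
apply: eq_bigr => S _; rewrite wedgeZl wedge_blade finset.setI0 eqxx wsign0r finset.setU0 scale1r.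
by [].
Qed.

Lemma wedge_scall {R : realType} {K : nat} (c : R) (x : Grass R K) :
  wedge (scal K c) x = c *: x.
Proof. by rewrite /scal wedgeZl wedge_blade0l. Qed.

Lemma wedge_scalr {R : realType} {K : nat} (c : R) (x : Grass R K) :
  wedge x (scal K c) = c *: x.
Proof. by rewrite /scal wedgeZr wedge_blade0r. Qed.

Lemma wedge11 {R : realType} {K : nat} (B C : 'I_K) :
  wedge (blade R [set B]) (blade R [set C]) =
  if B == C then 0 else (if (C < B)%N then -1 else 1) *: blade R [set B; C].
Proof.
rewrite wedge_blade wsign11.
have -> : ([set B] :&: [set C] == finset.set0) = (B != C).
  case: (B =P C) => [->|nBC]; first by rewrite finset.setIid /=; apply/negbTE/eqP => /setP /(_ C); rewrite !inE eqxx.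
  apply/eqP/setP => x; rewrite !inE.
  by case: (x =P B) => [->|] //=; case: (B =P C).
by case: (B =P C).
Qed.

Lemma wedge11_anti {R : realType} {K : nat} (B C : 'I_K) :
  wedge (blade R [set B]) (blade R [set C]) = - wedge (blade R [set C]) (blade R [set B]).
Proof.
rewrite !wedge11 eq_sym; case: (C =P B) => [_|nBC]; first by rewrite oppr0.
rewrite finset.setUC -scaleNr; congr (_ *: _).
have : (B : nat) != C by apply/eqP => /val_inj => e; apply: nBC.
rewrite neq_ltn; case/orP => h.
  by rewrite h ltnNge ltnW // opprK.
by rewrite h ltnNge ltnW.
Qed.
Definition F2 {R : realType} {K : nat} (X : 'M[R]_K) : Grass R K :=
  \sum_(B : 'I_K) \sum_(C : 'I_K) X B C *: wedge (blade R [set B]) (blade R [set C]).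
Definition F1 {R : realType} {K : nat} (a : 'I_K -> R) : Grass R K :=
  \sum_(D : 'I_K) a D *: blade R [set D].

Lemma F2D {R : realType} {K : nat} (X Y : 'M[R]_K) : F2 (X + Y) = F2 X + F2 Y.
Proof.
rewrite /F2 -big_split /=; apply: eq_bigr => B _; rewrite -big_split /=.
by apply: eq_bigr => C _; rewrite mxE scalerDl.
Qed.
Lemma F2Z {R : realType} {K : nat} (c : R) (X : 'M[R]_K) : F2 (c *: X) = c *: F2 X.
Proof.
rewrite /F2 scaler_sumr; apply: eq_bigr => B _; rewrite scaler_sumr.
by apply: eq_bigr => C _; rewrite mxE scalerA.
Qed.
Lemma F20 {R : realType} {K : nat} : F2 (0 : 'M[R]_K) = 0.
Proof.
rewrite /F2 big1 // => B _; rewrite big1 // => C _; by rewrite mxE scale0r.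
Qed.
Lemma F2N {R : realType} {K : nat} (X : 'M[R]_K) : F2 (- X) = - F2 X.
Proof.
rewrite /F2 -sumrN; apply: eq_bigr => B _; rewrite -sumrN.
by apply: eq_bigr => C _; rewrite mxE scaleNr.
Qed.
Lemma F2B {R : realType} {K : nat} (X Y : 'M[R]_K) : F2 (X - Y) = F2 X - F2 Y.
Proof. by rewrite F2D F2N. Qed.
Lemma F2_sum {R : realType} {K : nat} (I : Type) (r : seq I) (P : pred I)
  (X : I -> 'M[R]_K) :
  F2 (\sum_(i <- r | P i) X i) = \sum_(i <- r | P i) F2 (X i).
Proof. exact: (big_morph F2 F2D F20). Qed.

Lemma F2_tr {R : realType} {K : nat} (X : 'M[R]_K) : F2 X^T = - F2 X.
Proof.
rewrite /F2 exchange_big -sumrN; apply: eq_bigr => C _; rewrite -sumrN.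
by apply: eq_bigr => B _; rewrite mxE wedge11_anti scalerN.
Qed.

Lemma F2_sym {R : realType} {K : nat} (X : 'M[R]_K) : X^T = X -> F2 X = 0.
Proof.
move=> hX; have e : F2 X = - F2 X by rewrite -F2_tr hX.
have h2 : (2 : R) != 0 by rewrite pnatr_eq0.
rewrite -[F2 X]scale1r -(mulVf h2) -scalerA (_ : 2 *: F2 X = 0) ?scaler0 //.
by rewrite scaler_nat mulr2n {2}e subrr.
Qed.

Lemma wedge_F1 {R : realType} {K : nat} (a b : 'I_K -> R) :
  wedge (F1 a) (F1 b) = F2 (\matrix_(D, E) (a D * b E)).
Proof.
rewrite /F1 /F2 wedge_suml; apply: eq_bigr => D _; rewrite wedge_sumr.
apply: eq_bigr => E _; by rewrite wedgeZl wedgeZr scalerA mxE mulrC.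
Qed.

Definition Dx {R : realType} {K : nat} (L : 'I_K -> 'I_K -> R) (S : {set 'I_K}) : Grass R K :=
  \sum_(a in S) \sum_(b : 'I_K) L a b *:
       wedge (wedge (blade R [set s in S | (s < a)%N]) (blade R [set b]))
             (blade R [set s in S | (a < s)%N]).

Lemma ext_derD {R : realType} {K : nat} L (x y : Grass R K) :
  ext_der L (x + y) = ext_der L x + ext_der L y.
Proof.
rewrite /ext_der -big_split /=; apply: eq_bigr => S _.
by rewrite ffunE scalerDl.
Qed.
Lemma ext_derZ {R : realType} {K : nat} L (c : R) (x : Grass R K) :
  ext_der L (c *: x) = c *: ext_der L x.
Proof.
rewrite /ext_der scaler_sumr; apply: eq_bigr => S _.
by rewrite ffunE scalerA.
Qed.
Lemma ext_der0 {R : realType} {K : nat} L : ext_der L (0 : Grass R K) = 0.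
Proof. by have := ext_derZ L 0 0; rewrite !scale0r. Qed.
Lemma ext_derN {R : realType} {K : nat} L (x : Grass R K) :
  ext_der L (- x) = - ext_der L x.
Proof. by rewrite -scaleN1r ext_derZ scaleN1r. Qed.
Lemma ext_derB {R : realType} {K : nat} L (x y : Grass R K) :
  ext_der L (x - y) = ext_der L x - ext_der L y.
Proof. by rewrite ext_derD ext_derN. Qed.
Lemma ext_der_sum {R : realType} {K : nat} L (I : Type) (r : seq I) (P : pred I)
  (X : I -> Grass R K) :
  ext_der L (\sum_(i <- r | P i) X i) = \sum_(i <- r | P i) ext_der L (X i).
Proof. exact: (big_morph (ext_der L) (ext_derD L) (ext_der0 L)). Qed.

Lemma ext_der_blade {R : realType} {K : nat} L (S : {set 'I_K}) :
  ext_der L (blade R S) = Dx L S.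
Proof.
rewrite /ext_der (bigD1 S) //= [X in _ + X]big1 ?addr0.
  by rewrite ffunE eqxx scale1r.
by move=> T nT; rewrite ffunE (negbTE nT) scale0r.
Qed.

Lemma ext_der_scal {R : realType} {K : nat} L (c : R) :
  ext_der L (scal K c) = 0.
Proof.
rewrite /scal ext_derZ ext_der_blade /Dx big_set0 scaler0 //.
Qed.
Lemma sets_pair {K : nat} (B C : 'I_K) : (B < C)%N ->
  [/\ [set s in [set B; C] | (s < B)%N] = finset.set0,
      [set s in [set B; C] | (B < s)%N] = [set C],
      [set s in [set B; C] | (s < C)%N] = [set B] &
      [set s in [set B; C] | (C < s)%N] = finset.set0].
Proof.
move=> h; have hn : (C < B)%N = false by rewrite ltnNge ltnW.
have nBC : (B == C) = false by apply/negbTE/eqP => e; move: h; rewrite e ltnn.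
split; apply/setP => s; rewrite !inE;
  (case: (eqVneq s B) => [->|nB] /=; [ | case: (eqVneq s C) => [->|nC] /=]);
  rewrite ?ltnn ?h ?hn ?nBC ?eqxx ?(negbTE nB) ?(negbTE nC) //.
all: try by rewrite eq_sym nBC.
Qed.

Lemma sets_one {K : nat} (A : 'I_K) :
  [set s in [set A] | (s < A)%N] = finset.set0 /\
  [set s in [set A] | (A < s)%N] = finset.set0.
Proof.
by split; apply/setP => s; rewrite !inE; case: (eqVneq s A) => [->|nA]; rewrite /= ?ltnn.
Qed.

Lemma ext_der_blade1 {R : realType} {K : nat} L (A : 'I_K) :
  ext_der L (blade R [set A]) = F1 (L A).
Proof.
rewrite ext_der_blade /Dx big_set1; case: (sets_one A) => -> ->.
by apply: eq_bigr => b _; rewrite wedge_blade0l wedge_blade0r.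
Qed.

Lemma Dpair {R : realType} {K : nat} (L : 'I_K -> 'I_K -> R) (B C : 'I_K) : (B < C)%N ->
  Dx L [set B; C] =
  \sum_(b : 'I_K) L B b *: wedge (blade R [set b]) (blade R [set C]) +
  \sum_(b : 'I_K) L C b *: wedge (blade R [set B]) (blade R [set b]).
Proof.
move=> h; rewrite /Dx big_setU1 /=; last first.
  by rewrite inE; apply/eqP => e; move: h; rewrite e ltnn.
rewrite big_set1; case: (sets_pair h) => -> -> -> ->.
by congr (_ + _); apply: eq_bigr => b _; rewrite ?wedge_blade0l ?wedge_blade0r.
Qed.

Lemma ext_der_w11 {R : realType} {K : nat} (L : 'I_K -> 'I_K -> R) (B C : 'I_K) :
  ext_der L (wedge (blade R [set B]) (blade R [set C])) =
  \sum_(D : 'I_K) L B D *: wedge (blade R [set D]) (blade R [set C]) +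
  \sum_(D : 'I_K) L C D *: wedge (blade R [set B]) (blade R [set D]).
Proof.
rewrite wedge11; case: (B =P C) => [<-|nBC].
  rewrite ext_der0 -big_split /=; symmetry; apply: big1 => D _.
  by rewrite (wedge11_anti B D) scalerN subrr.
have : (B : nat) != C by apply/eqP => /val_inj => e; apply: nBC.
rewrite neq_ltn; case/orP => h.
  by rewrite ltnNge ltnW // scale1r ext_der_blade Dpair.
rewrite h finset.setUC ext_derZ ext_der_blade Dpair // scaleN1r opprD addrC.
rewrite -!sumrN; congr (_ + _); apply: eq_bigr => b _.
  by rewrite (wedge11_anti C b) scalerN opprK.
by rewrite (wedge11_anti b B) scalerN opprK.
Qed.
Lemma ext_der_F2 {R : realType} {K : nat} (L : 'I_K -> 'I_K -> R) (X : 'M[R]_K) :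
  ext_der L (F2 X) =
  F2 ((\matrix_(a, b) L a b)^T *m X + X *m (\matrix_(a, b) L a b)).
Proof.
have -> : ext_der L (F2 X) =
   \sum_(B : 'I_K) \sum_(C : 'I_K) \sum_(D : 'I_K)
      (X B C * L B D) *: wedge (blade R [set D]) (blade R [set C]) +
   \sum_(B : 'I_K) \sum_(C : 'I_K) \sum_(D : 'I_K)
      (X B C * L C D) *: wedge (blade R [set B]) (blade R [set D]).
  rewrite /F2 ext_der_sum -big_split /=; apply: eq_bigr => B _.
  rewrite ext_der_sum -big_split /=; apply: eq_bigr => C _.
  rewrite ext_derZ ext_der_w11 scalerDr !scaler_sumr.
  by congr (_ + _); apply: eq_bigr => D _; rewrite scalerA.
rewrite F2D; congr (_ + _).
  rewrite exchange_big /=.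
  under eq_bigr => C _ do rewrite exchange_big /=.
  rewrite exchange_big /=; apply: eq_bigr => D _; apply: eq_bigr => C _.
  rewrite !mxE scaler_suml; apply: eq_bigr => B _; by rewrite !mxE mulrC.
apply: eq_bigr => B _; rewrite exchange_big /=; apply: eq_bigr => D _.
rewrite !mxE scaler_suml; apply: eq_bigr => C _; by rewrite !mxE.
Qed.

Lemma intlD {R : realType} {K : nat} A (x y : Grass R K) :
  intl A (x + y) = intl A x + intl A y.
Proof.
apply/ffunP => W; rewrite ?ffunE; case: ifP => _; first by rewrite addr0.
by rewrite ?ffunE mulrDr.
Qed.
Lemma intlZ {R : realType} {K : nat} A (c : R) (x : Grass R K) :
  intl A (c *: x) = c *: intl A x.
Proof.
apply/ffunP => W; rewrite ?ffunE; case: ifP => _; first by rewrite scaleRE mulr0.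
by rewrite ?ffunE !scaleRE mulrCA.
Qed.
Lemma intl0 {R : realType} {K : nat} A : intl A (0 : Grass R K) = 0.
Proof. by apply/ffunP => W; rewrite ?ffunE; case: ifP => //; rewrite ?ffunE mulr0. Qed.
Lemma intlN {R : realType} {K : nat} A (x : Grass R K) : intl A (- x) = - intl A x.
Proof. by rewrite -scaleN1r intlZ scaleN1r. Qed.
Lemma intlB {R : realType} {K : nat} A (x y : Grass R K) :
  intl A (x - y) = intl A x - intl A y.
Proof. by rewrite intlD intlN. Qed.
Lemma intl_sum {R : realType} {K : nat} A (I : Type) (r : seq I) (P : pred I)
  (X : I -> Grass R K) :
  intl A (\sum_(i <- r | P i) X i) = \sum_(i <- r | P i) intl A (X i).
Proof. exact: (big_morph (intl A) (intlD A) (intl0 A)). Qed.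

Lemma intl_scal {R : realType} {K : nat} A (c : R) : intl A (scal K c) = 0.
Proof.
apply/ffunP => W; rewrite ?ffunE; case: ifP => // AW.
rewrite ?ffunE (_ : (A |: W == finset.set0) = false) ?mulr0 ?scaleRE ?mulr0 //.
apply/negbTE/eqP => /setP /(_ A); rewrite !inE eqxx.
by [].
Qed.

Lemma intl_blade {R : realType} {K : nat} (A : 'I_K) (S : {set 'I_K}) :
  intl A (blade R S) =
  if A \in S then (-1) ^+ #|[set s in S | (s < A)%N]| *: blade R (S :\ A) else 0.
Proof.
apply/ffunP => W; rewrite ?ffunE.
case: ifP => AW.
  case: ifP => AS; rewrite ?ffunE // ?ffunE.
  rewrite (_ : (W == S :\ A) = false) ?scaleRE ?mulr0 //.
  by apply/negbTE/eqP => e; move: AW; rewrite e !inE eqxx.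
case: ifP => AS; last first.
  rewrite ffunE (_ : (A |: W == S) = false) ?mulr0 //.
  by apply/negbTE/eqP => e; move: AS; rewrite -e !inE eqxx.
rewrite ?ffunE scaleRE.
have [eW|nW] := eqVneq W (S :\ A).
  rewrite eW finset.setD1K // eqxx.
  rewrite (_ : [set s in S :\ A | (s < A)%N] = [set s in S | (s < A)%N]) //.
  apply/setP => s; rewrite !inE.
  by case: (eqVneq s A) => [->|] //=; rewrite ltnn andbF.
rewrite (_ : (A |: W == S) = false) ?mulr0 //.
apply/negbTE/eqP => e; move/eqP: nW; apply; rewrite -e.
by rewrite finset.setU1K ?AW.
Qed.
Lemma sum_deltaV {R : realType} {K : nat} (T : finType) (a : T) (F : T -> Grass R K) :
  \sum_(t : T) (a == t)%:R *: F t = F a.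
Proof.
rewrite (bigD1 a) //= eqxx scale1r big1 ?addr0 // => t nt.
by rewrite eq_sym (negbTE nt) scale0r.
Qed.

Lemma sum_delta' {R : realType} (T : finType) (a : T) (F : T -> R) :
  \sum_(t : T) F t * (a == t)%:R = F a.
Proof. by rewrite -[RHS](sum_delta a F); apply: eq_bigr => t _; rewrite eq_sym. Qed.

Lemma intl_blade1 {R : realType} {K : nat} (A B : 'I_K) :
  intl A (blade R [set B]) = (A == B)%:R *: blade R finset.set0.
Proof.
rewrite intl_blade inE; case: (eqVneq A B) => [->|nAB]; last by rewrite scale0r.
rewrite (sets_one B).1 cards0 expr0 scale1r finset.setDv; by rewrite scale1r.
Qed.

Lemma setD_pair {K : nat} (B C : 'I_K) : B != C ->
  [set B; C] :\ B = [set C] /\ [set B; C] :\ C = [set B].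
Proof.
move=> nBC; split; apply/setP => s; rewrite !inE;
  case: (eqVneq s B) => [->|nB] /=; case: (eqVneq s C) => [e|nC] //=.
all: by rewrite ?(negbTE nBC) ?nBC.
Qed.

Lemma intl_pair {R : realType} {K : nat} (A B C : 'I_K) : (B < C)%N ->
  intl A (blade R [set B; C]) = (A == B)%:R *: blade R [set C] - (A == C)%:R *: blade R [set B].
Proof.
move=> h; have nBC : B != C by apply/eqP => e; move: h; rewrite e ltnn.
case: (sets_pair h) => s1 _ s3 _; case: (setD_pair nBC) => d1 d2.
rewrite intl_blade !inE; case: (eqVneq A B) => [->|nAB] /=.
  by rewrite s1 d1 cards0 expr0 (negbTE nBC) !scale1r scale0r subr0.
case: (eqVneq A C) => [->|nAC] /=.
  by rewrite s3 d2 cards1 expr1 !scaleN1r scale1r scale0r sub0r.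
by rewrite !scale0r subr0.
Qed.

Lemma intl_w11 {R : realType} {K : nat} (A B C : 'I_K) :
  intl A (wedge (blade R [set B]) (blade R [set C])) =
  (A == B)%:R *: blade R [set C] - (A == C)%:R *: blade R [set B].
Proof.
rewrite wedge11; case: (B =P C) => [<-|nBC]; first by rewrite intl0 subrr.
have : (B : nat) != C by apply/eqP => /val_inj => e; apply: nBC.
rewrite neq_ltn; case/orP => h.
  by rewrite ltnNge ltnW // scale1r intl_pair.
by rewrite h finset.setUC intlZ intl_pair // scaleN1r opprB.
Qed.

Lemma intl_F2 {R : realType} {K : nat} (A : 'I_K) (X : 'M[R]_K) :
  intl A (F2 X) = F1 (fun D => X A D - X D A).
Proof.
rewrite /F2 /F1 intl_sum.
under eq_bigr => B _ do rewrite intl_sum.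
under eq_bigr => B _ do under eq_bigr => C _ do rewrite intlZ intl_w11 scalerBr !scalerA.
under eq_bigr => B _ do rewrite sumrB.
rewrite sumrB; symmetry.
under eq_bigr => D _ do rewrite scalerBl.
rewrite sumrB; symmetry; congr (_ - _).
  rewrite exchange_big /=; apply: eq_bigr => C _; rewrite -scaler_suml.
  by rewrite sum_delta'.
by apply: eq_bigr => B _; rewrite -scaler_suml sum_delta'.
Qed.

Lemma intj_F1 {R : realType} {K : nat} (A : 'I_K) (x : Grass R K) (c : 'I_K -> R) :
  intl A x = F1 c -> intj A x = - F1 c.
Proof.
move=> e; apply/ffunP => W; rewrite ffunE e /F1 ?ffunE !sum_ffunE mulr_sumr -sumrN.
apply: eq_bigr => D _; rewrite ?ffunE !scaleRE.
case: (eqVneq W [set D]) => [->|_]; last by rewrite !mulr0 oppr0.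
by rewrite cards1 expr1 !mulr1 mulN1r.
Qed.

Lemma intj_scal {R : realType} {K : nat} (A : 'I_K) (c : R) : intj A (scal K c) = 0.
Proof. by apply/ffunP => W; rewrite ffunE intl_scal ?ffunE mulr0. Qed.

Lemma F1Z {R : realType} {K : nat} (c : R) (a : 'I_K -> R) :
  c *: F1 a = F1 (fun D => c * a D).
Proof. by rewrite /F1 scaler_sumr; apply: eq_bigr => D _; rewrite scalerA. Qed.
Lemma F1N {R : realType} {K : nat} (a : 'I_K -> R) :
  - F1 a = F1 (fun D => - a D).
Proof. by rewrite /F1 -sumrN; apply: eq_bigr => D _; rewrite scaleNr. Qed.
Lemma derive_bigsum {R : realType} {n : nat} (I : Type) (r : seq I)
  (F : I -> 'rV[R]_n -> R) x v :
  (forall i, derivable (F i) x v) ->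
  derivable (fun y => \sum_(i <- r) F i y) x v /\
  'D_v (fun y => \sum_(i <- r) F i y) x = \sum_(i <- r) 'D_v (F i) x.
Proof.
move=> dF; elim: r => [|i r [IHd IH]].
  rewrite (_ : (fun y => \sum_(i <- [::]) F i y) = cst 0); last first.
    by apply: funext => y; rewrite big_nil.
  by split; [exact: derivable_cst | rewrite derive_cst big_nil].
rewrite (_ : (fun y => \sum_(j <- i :: r) F j y) =
             F i + (fun y => \sum_(j <- r) F j y)); last first.
  by apply: funext => y; rewrite big_cons.
split; first exact: derivableD.
by rewrite deriveD // IH big_cons.
Qed.

Lemma derive_cmul {R : realType} {n : nat} (a : R) (f : 'rV[R]_n -> R) x v :
  derivable f x v ->
  derivable (fun y => a * f y) x v /\ 'D_v (fun y => a * f y) x = a * 'D_v f x.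
Proof.
move=> df; split; last exact: deriveMl.
rewrite (_ : (fun y => a * f y) = cst a * f); last by apply: funext.
by apply: derivableM => //; exact: derivable_cst.
Qed.

Lemma derive_cadd {R : realType} {n : nat} (c : R) (f : 'rV[R]_n -> R) x v :
  derivable f x v ->
  'D_v (fun y => c + f y) x = 'D_v f x.
Proof.
move=> df; rewrite (_ : (fun y => c + f y) = cst c + f); last by apply: funext.
by rewrite deriveD ?derive_cst ?add0r //; exact: derivable_cst.
Qed.

Lemma derive_coord {R : realType} {n : nat} (i : 'I_n) (x v : 'rV[R]_n) :
  derivable (fun y : 'rV[R]_n => y 0 i) x v /\
  'D_v (fun y : 'rV[R]_n => y 0 i) x = v 0 i.
Proof.
have dM := @derivable_id R 'rV[R]_n x v.
split; first by move/derivable_mxP : dM => /(_ 0 i).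
have := derive_mx dM; rewrite derive_id => /(congr1 (fun M : 'rV[R]_n => M 0 i)).
by rewrite mxE.
Qed.

Lemma derive_cstf {R : realType} {n : nat} (c : R) (x v : 'rV[R]_n) :
  'D_v (fun _ : 'rV[R]_n => c) x = 0.
Proof. exact: derive_cst. Qed.
Lemma g0E {R : realType} {K : nat} W : (0 : Grass R K) W = 0.
Proof. by rewrite ffunE. Qed.

Definition Gm {R : realType} {n K : nat} (Gam : chris R n K) (k : 'I_n) (q : 'rV[R]_n) : 'M[R]_K :=
  \matrix_(A, C) Gam k A C q.
Definition Mm {R : realType} {n K : nat} (h : 'M[R]_K) (Gam : chris R n K) (i : 'I_n) (q : 'rV[R]_n) : 'M[R]_K :=
  (invmx h)^T *m Gm Gam i q.
Definition DGm {R : realType} {n K : nat} (Gam : chris R n K) (k i : 'I_n) (q : 'rV[R]_n) : 'M[R]_K :=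
  \matrix_(A, C) 'D_(ecoord R k) (Gam i A C) q.

Lemma F2E {R : realType} {K : nat} (X : 'M[R]_K) W :
  F2 X W = \sum_B \sum_C X B C * wedge (blade R [set B]) (blade R [set C]) W.
Proof.
rewrite /F2 sum_ffunE; apply: eq_bigr => B _; rewrite sum_ffunE.
by apply: eq_bigr => C _; rewrite ?ffunE scaleRE.
Qed.

Lemma scalE {R : realType} {K : nat} (c : R) W : scal K c W = c * (W == finset.set0)%:R.
Proof. by rewrite /scal ?ffunE scaleRE. Qed.

Lemma rsec_form {R : realType} {n K : nat} (h : 'M[R]_K) (Gam : chris R n K) i q p :
  rsec h Gam i q p = scal K (p 0 i) - 2^-1 *: F2 (Mm h Gam i q).
Proof.
rewrite /rsec /F2; congr (_ - 2^-1 *: _).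
rewrite exchange_big /=; apply: eq_bigr => B _.
rewrite exchange_big /=; apply: eq_bigr => C _.
rewrite !mxE scaler_suml; apply: eq_bigr => A _; by rewrite !mxE.
Qed.

Lemma nablaP_qsec {R : realType} {n K : nat} (k i : 'I_n) q p :
  nablaP k (qsec (R := R) K i) q p = 0.
Proof. by apply/ffunP => W; rewrite ?ffunE g0E /qsec derive_cstf. Qed.

Lemma nablaP_usec {R : realType} {n K : nat} (k : 'I_n) (A : 'I_K) q p :
  nablaP k (usec (R := R) A) q p = 0.
Proof. by apply/ffunP => W; rewrite ?ffunE g0E /usec derive_cstf. Qed.

Lemma nablaP_rsec {R : realType} {n K : nat} (h : 'M[R]_K) (Gam : chris R n K) (k i : 'I_n) q p :
  nablaP k (rsec h Gam i) q p = scal K (ecoord R k 0 i).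
Proof.
apply/ffunP => W; rewrite scalE ffunE.
rewrite (_ : (fun p' => rsec h Gam i q p' W) =
   (fun p' => (- (2^-1 *: F2 (Mm h Gam i q))) W + (W == finset.set0)%:R * p' 0 i)); last first.
  apply: funext => p'; rewrite rsec_form ffunE scalE.
  by rewrite addrC mulrC.
have [dc Dc] := derive_coord i p (ecoord R k).
have [dm Dm] := derive_cmul (W == finset.set0)%:R dc.
by rewrite derive_cadd // Dm Dc mulrC.
Qed.

Lemma nablaQ_qsec {R : realType} {n K : nat} (Gam : chris R n K) (k i : 'I_n) q p :
  nablaQ Gam k (qsec K i) q p = scal K (ecoord R k 0 i).
Proof.
rewrite /nablaQ ext_der_scal addr0; apply/ffunP => W; rewrite scalE ffunE.
rewrite (_ : (fun q' => qsec K i q' p W) = (fun q' => (W == finset.set0)%:R * q' 0 i)); last first.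
  by apply: funext => q'; rewrite /qsec scalE mulrC.
have [dc Dc] := derive_coord i q (ecoord R k).
have [dm Dm] := derive_cmul (W == finset.set0)%:R dc.
by rewrite Dm Dc mulrC.
Qed.

Lemma nablaQ_usec {R : realType} {n K : nat} (Gam : chris R n K) (k : 'I_n) (A : 'I_K) q p :
  nablaQ Gam k (usec A) q p = F1 (fun C => Gam k A C q).
Proof.
rewrite /nablaQ ext_der_blade1 (_ : [ffun W => _] = 0) ?add0r //.
by apply/ffunP => W; rewrite ?ffunE g0E /usec derive_cstf.
Qed.
Lemma derive_sum3 {R : realType} {n K : nat} (a : 'I_K -> 'I_K -> 'I_K -> R)
  (g : 'I_K -> 'I_K -> 'I_K -> 'rV[R]_n -> R) x v :
  (forall B C A, derivable (g B C A) x v) ->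
  derivable (fun y => \sum_B \sum_C \sum_A a B C A * g B C A y) x v /\
  'D_v (fun y => \sum_B \sum_C \sum_A a B C A * g B C A y) x =
     \sum_B \sum_C \sum_A a B C A * 'D_v (g B C A) x.
Proof.
move=> dg.
have d1 : forall B C, derivable (fun y => \sum_A a B C A * g B C A y) x v /\
    'D_v (fun y => \sum_A a B C A * g B C A y) x = \sum_A a B C A * 'D_v (g B C A) x.
  move=> B C.
  have := @derive_bigsum R n _ (index_enum 'I_K) (fun A y => a B C A * g B C A y) x v.
  case=> [A|d e]; first exact: (derive_cmul _ (dg B C A)).1.
  split => //; rewrite e; apply: eq_bigr => A _; exact: (derive_cmul _ (dg B C A)).2.
have d2 : forall B, derivable (fun y => \sum_C \sum_A a B C A * g B C A y) x v /\
    'D_v (fun y => \sum_C \sum_A a B C A * g B C A y) x = \sum_C \sum_A a B C A * 'D_v (g B C A) x.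
  move=> B.
  have := @derive_bigsum R n _ (index_enum 'I_K) (fun C y => \sum_A a B C A * g B C A y) x v.
  case=> [C|d e]; first exact: (d1 B C).1.
  split => //; rewrite e; apply: eq_bigr => C _; exact: (d1 B C).2.
have := @derive_bigsum R n _ (index_enum 'I_K) (fun B y => \sum_C \sum_A a B C A * g B C A y) x v.
case=> [B|d e]; first exact: (d2 B).1.
split => //; rewrite e; apply: eq_bigr => B _; exact: (d2 B).2.
Qed.

Lemma nablaQ_rsec {R : realType} {n K : nat} (h : 'M[R]_K) (Gam : chris R n K) (k i : 'I_n) q p :
  (forall A C, differentiable (Gam i A C) q) ->
  nablaQ Gam k (rsec h Gam i) q p =
  - 2^-1 *: F2 ((invmx h)^T *m DGm Gam k i q
                + ((Gm Gam k q)^T *m Mm h Gam i q + Mm h Gam i q *m Gm Gam k q)).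
Proof.
move=> dG.
rewrite /nablaQ [in X in _ + X]rsec_form ext_derB ext_der_scal sub0r ext_derZ ext_der_F2.
rewrite !F2D !scalerDr !opprD !addrA !scaleNr; congr (_ + _ + _).
apply/ffunP => W; rewrite ffunE [RHS]ffunE ffunE scaleRE F2E.
pose a := fun (B C A : 'I_K) => - 2^-1 * (invmx h A B * wedge (blade R [set B]) (blade R [set C]) W).
rewrite (_ : (fun q' => rsec h Gam i q' p W) =
   (fun q' => scal K (p 0 i) W + \sum_B \sum_C \sum_A a B C A * Gam i A C q')); last first.
  apply: funext => q'; rewrite rsec_form ffunE; congr (_ + _).
  rewrite ffunE ffunE scaleRE F2E mulr_sumr -sumrN; apply: eq_bigr => B _.
  rewrite mulr_sumr -sumrN; apply: eq_bigr => C _.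
  rewrite !mxE mulr_suml mulr_sumr -sumrN; apply: eq_bigr => A _.
  rewrite !mxE /a; ring.
have [d e] := derive_sum3 (g := fun B C A => Gam i A C) (x := q) (v := ecoord R k) a
   (fun B C A => diff_derivable (v := ecoord R k) (dG A C)).
rewrite derive_cadd // e mulr_sumr -sumrN; apply: eq_bigr => B _.
rewrite mulr_sumr -sumrN; apply: eq_bigr => C _.
rewrite !mxE mulr_suml mulr_sumr -sumrN; apply: eq_bigr => A _.
rewrite !mxE /a; ring.
Qed.
Lemma ecoordE {R : realType} {n : nat} (k i : 'I_n) : ecoord R k 0 i = (i == k)%:R.
Proof. by rewrite /ecoord mxE eqxx /= eq_sym. Qed.

Lemma nablaE_uE {R : realType} {n K : nat} (Gam : chris R n K) j (A : 'I_K) :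
  nablaE Gam j (uE (R := R) (n := n) A) = fun q' C => Gam j A C q'.
Proof.
apply: funext => q'; apply: funext => C.
rewrite /nablaE /uE derive_cstf add0r.
rewrite (bigD1 A) //= eqxx mul1r big1 ?addr0 // => A' nA.
by rewrite eq_sym (negbTE nA) mul0r.
Qed.

Lemma curv_form {R : realType} {n K : nat} (Gam : chris R n K) (i j : 'I_n) q :
  \matrix_(A, C) curv Gam C A i j q =
  DGm Gam i j q - DGm Gam j i q + Gm Gam j q *m Gm Gam i q - Gm Gam i q *m Gm Gam j q.
Proof.
apply/matrixP => A C; rewrite !mxE /curv !nablaE_uE /nablaE.
have -> : \sum_j0 Gm Gam j q A j0 * Gm Gam i q j0 C = \sum_j0 Gam j A j0 q * Gam i j0 C q.
  by apply: eq_bigr => l _; rewrite !mxE.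
have -> : \sum_j0 Gm Gam i q A j0 * Gm Gam j q j0 C = \sum_j0 Gam i A j0 q * Gam j j0 C q.
  by apply: eq_bigr => l _; rewrite !mxE.
rewrite /=; ring.
Qed.

Lemma sum3_F2 {R : realType} {K : nat} (Hi : 'M[R]_K) (T : 'I_K -> 'I_K -> R) :
  \sum_(A : 'I_K) \sum_(B : 'I_K) \sum_(C : 'I_K)
     (Hi A B * T A C) *: wedge (blade R [set B]) (blade R [set C]) =
  F2 (Hi^T *m \matrix_(A, C) T A C).
Proof.
rewrite /F2 exchange_big /=; apply: eq_bigr => B _.
rewrite exchange_big /=; apply: eq_bigr => C _.
rewrite !mxE scaler_suml; apply: eq_bigr => A _; by rewrite !mxE.
Qed.
Lemma HiT {R : realType} {K : nat} (h : 'M[R]_K) : h^T = h -> (invmx h)^T = invmx h.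
Proof. by move=> hT; rewrite trmx_inv hT. Qed.

Lemma GtHi {R : realType} {K : nat} (h G : 'M[R]_K) : h^T = h -> h \in unitmx ->
  (G *m h)^T = - (G *m h) -> G^T *m invmx h = - (invmx h *m G).
Proof.
move=> hT hU mG.
have e : h *m G^T = - (G *m h) by rewrite -mG trmx_mul hT.
rewrite -{1}(mulKmx hU G^T) e mulmxN mulNmx -!mulmxA (mulmxV hU) mulmx1.
by [].
Qed.

Lemma Mt {R : realType} {K : nat} (h G : 'M[R]_K) : h^T = h -> h \in unitmx ->
  (G *m h)^T = - (G *m h) -> (invmx h *m G)^T = - (invmx h *m G).
Proof. by move=> hT hU mG; rewrite trmx_mul HiT // GtHi. Qed.

Lemma GtM {R : realType} {K : nat} (h G G' : 'M[R]_K) : h^T = h -> h \in unitmx ->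
  (G *m h)^T = - (G *m h) -> G^T *m (invmx h *m G') = - (invmx h *m G *m G').
Proof. by move=> hT hU mG; rewrite mulmxA GtHi // mulNmx. Qed.

Lemma MGt {R : realType} {K : nat} (h G G' : 'M[R]_K) : h^T = h -> h \in unitmx ->
  (G *m h)^T = - (G *m h) -> (G' *m h)^T = - (G' *m h) ->
  (invmx h *m G *m G')^T = invmx h *m G' *m G.
Proof.
move=> hT hU mG mG'; rewrite trmx_mul Mt // mulmxN GtM // opprK.
by [].
Qed.

Lemma metric_mx {R : realType} {n K : nat} (U : set 'rV[R]_n) (h : 'M[R]_K) (Gam : chris R n K) k q :
  h^T = h -> metric_conn U h Gam -> U q ->
  (Gm Gam k q *m h)^T = - (Gm Gam k q *m h).
Proof.
move=> hT mc Uq; apply/matrixP => A B; rewrite !mxE.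
have := mc k A B q Uq => e.
apply/eqP; rewrite -subr_eq0 opprK; apply/eqP; rewrite -[RHS]e addrC.
congr (_ + _); apply: eq_bigr => C _; rewrite !mxE //.
by rewrite -{1}hT mxE.
Qed.
Lemma intj_qsec {R : realType} {n K : nat} (A : 'I_K) (i : 'I_n) (q p : 'rV[R]_n) :
  intj A (qsec K i q p) = 0.
Proof. exact: intj_scal. Qed.

Lemma intl_usec {R : realType} {n K : nat} (B A : 'I_K) (q p : 'rV[R]_n) :
  intl B (usec A q p) = (B == A)%:R *: blade R finset.set0.
Proof. exact: intl_blade1. Qed.

Lemma intj_usec {R : realType} {n K : nat} (B A : 'I_K) (q p : 'rV[R]_n) :
  intj B (usec A q p) = (B == A)%:R *: blade R finset.set0.
Proof.
apply/ffunP => W; rewrite ffunE intl_blade1 ?ffunE !scaleRE.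
by case: (eqVneq W finset.set0) => [->|_]; rewrite ?cards0 ?expr0 ?mul1r ?mulr0.
Qed.

Lemma intl_rsec {R : realType} {n K : nat} (h : 'M[R]_K) (Gam : chris R n K) (B : 'I_K) i q p :
  intl B (rsec h Gam i q p) =
  F1 (fun E => - 2^-1 * (Mm h Gam i q B E - Mm h Gam i q E B)).
Proof.
rewrite rsec_form intlB intl_scal sub0r intlZ intl_F2 F1Z F1N.
by congr F1; apply: funext => E; rewrite mulNr.
Qed.

Lemma intj_rsec {R : realType} {n K : nat} (h : 'M[R]_K) (Gam : chris R n K) (A : 'I_K) i q p :
  intj A (rsec h Gam i q p) =
  F1 (fun D => - (- 2^-1 * (Mm h Gam i q A D - Mm h Gam i q D A))).
Proof. by rewrite (intj_F1 (intl_rsec _ _ _ _ _ _)) F1N. Qed.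

Lemma F1_sum {R : realType} {K : nat} (I : finType) (a : I -> 'I_K -> R) :
  \sum_(t : I) F1 (a t) = F1 (fun D => \sum_(t : I) a t D).
Proof.
rewrite /F1 exchange_big /=; apply: eq_bigr => D _; by rewrite scaler_suml.
Qed.

Lemma F1B {R : realType} {K : nat} (a b : 'I_K -> R) : F1 a - F1 b = F1 (fun D => a D - b D).
Proof. by rewrite /F1 -sumrB; apply: eq_bigr => D _; rewrite scalerBl. Qed.

Lemma F1_eq0 {R : realType} {K : nat} (a : 'I_K -> R) : (forall D, a D = 0) -> F1 a = 0.
Proof. by move=> e; rewrite /F1 big1 // => D _; rewrite e scale0r. Qed.

Lemma claim_qq {R : realType} {n K : nat} (h : 'M[R]_K) (Gam : chris R n K) q p (i j : 'I_n) :
  rbracket h Gam (qsec K i) (qsec K j) q p = 0.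
Proof.
rewrite /rbracket [X in X - _ + _]big1; last by move=> k _; rewrite !nablaP_qsec wedge0r wedge0l subrr.
rewrite [X in _ - _ *: X + _]big1; last first.
  by move=> k _; rewrite big1 // => l _; rewrite !nablaP_qsec !wedge0r.
rewrite [X in _ + X]big1; last first.
  by move=> A _; rewrite big1 // => B _; rewrite intj_qsec wedge0l scaler0.
by rewrite scaler0 subr0 addr0.
Qed.

Lemma claim_qu {R : realType} {n K : nat} (h : 'M[R]_K) (Gam : chris R n K) q p (i : 'I_n) (A : 'I_K) :
  rbracket h Gam (qsec K i) (usec A) q p = 0.
Proof.
rewrite /rbracket [X in X - _ + _]big1; last by move=> k _; rewrite nablaP_qsec nablaP_usec wedge0r wedge0l subrr.
rewrite [X in _ - _ *: X + _]big1; last first.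
  by move=> k _; rewrite big1 // => l _; rewrite !nablaP_usec !wedge0r.
rewrite [X in _ + X]big1; last first.
  by move=> A' _; rewrite big1 // => B _; rewrite intj_qsec wedge0l scaler0.
by rewrite scaler0 subr0 addr0.
Qed.

Lemma claim_uu {R : realType} {n K : nat} (h : 'M[R]_K) (Gam : chris R n K) q p (A B : 'I_K) :
  rbracket h Gam (usec A) (usec B) q p = scal K (h A B).
Proof.
rewrite /rbracket [X in X - _ + _]big1; last by move=> k _; rewrite !nablaP_usec wedge0r wedge0l subrr.
rewrite [X in _ - _ *: X + _]big1; last first.
  by move=> k _; rewrite big1 // => l _; rewrite !nablaP_usec !wedge0r.
rewrite scaler0 subr0 add0r.
rewrite (eq_bigr (fun A' => (A == A')%:R *: \sum_B' (B == B')%:R *: (h A' B' *: blade R finset.set0))).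
  by rewrite sum_deltaV sum_deltaV.
move=> A' _; rewrite scaler_sumr; apply: eq_bigr => B' _.
rewrite intj_usec intl_usec wedgeZl wedgeZr wedge_blade0l !scalerA.
by congr (_ *: _); rewrite (eq_sym A) (eq_sym B); ring.
Qed.

Lemma claim_qr {R : realType} {n K : nat} (h : 'M[R]_K) (Gam : chris R n K) q p (i j : 'I_n) :
  rbracket h Gam (qsec K i) (rsec h Gam j) q p = scal K ((i == j)%:R).
Proof.
rewrite /rbracket [X in _ - _ *: X + _]big1; last first.
  by move=> k _; rewrite big1 // => l _; rewrite nablaP_qsec wedge0r wedge0l.
rewrite [X in _ + X]big1; last first.
  by move=> A _; rewrite big1 // => B _; rewrite intj_qsec wedge0l scaler0.
rewrite scaler0 subr0 addr0.
under eq_bigr => k _ do rewrite nablaQ_qsec nablaP_rsec nablaP_qsec wedge0l subr0 wedge_scall.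
rewrite /scal.
under eq_bigr => k _ do rewrite scalerA !ecoordE.
by rewrite -scaler_suml sum_delta'.
Qed.
Lemma sum_delta_sc {R : realType} {K : nat} (c : 'I_K -> R) (X : Grass R K) (a : 'I_K) :
  \sum_(t : 'I_K) c t *: ((t == a)%:R *: X) = c a *: X.
Proof.
rewrite (eq_bigr (fun t => (a == t)%:R *: (c t *: X))) ?sum_deltaV // => t _.
by rewrite !scalerA mulrC eq_sym.
Qed.

Lemma claim_ru {R : realType} {n K : nat} (U : set 'rV[R]_n) (h : 'M[R]_K) (Gam : chris R n K) q p
  (i : 'I_n) (A : 'I_K) :
  h^T = h -> h \in unitmx -> metric_conn U h Gam -> U q ->
  rbracket h Gam (rsec h Gam i) (usec A) q p = 0.
Proof.
move=> hT hU mc Uq.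
have MT : (Mm h Gam i q)^T = - Mm h Gam i q.
  by rewrite /Mm HiT // Mt // (metric_mx i hT mc Uq).
have HM : h *m Mm h Gam i q = Gm Gam i q by rewrite /Mm HiT // mulKVmx.
rewrite /rbracket [X in _ - _ *: X + _]big1; last first.
  by move=> k _; rewrite big1 // => l _; rewrite !nablaP_usec !wedge0r.
rewrite scaler0 subr0.
under eq_bigr => k _ do rewrite nablaP_usec wedge0r sub0r nablaP_rsec nablaQ_usec wedge_scall ecoordE.
rewrite sumrN sum_deltaV.
under eq_bigr => A' _ do under eq_bigr => B' _ do rewrite intj_rsec intl_usec wedgeZr wedge_blade0r.
under eq_bigr => A' _ do rewrite sum_delta_sc F1Z.
rewrite F1_sum addrC F1B; apply: F1_eq0 => D.
apply/eqP; rewrite subr_eq0; apply/eqP.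
transitivity ((h *m Mm h Gam i q) A D); last by rewrite HM mxE.
rewrite mxE; apply: eq_bigr => A' _.
have e1 : Mm h Gam i q D A' = - Mm h Gam i q A' D.
  by have := congr1 (fun X : 'M[R]_K => X A' D) MT; rewrite !mxE.
have e2 : h A' A = h A A' by rewrite -{1}hT mxE.
by rewrite e1 e2; field.
Qed.
Lemma T3_eq {R : realType} {K : nat} (h M1 M2 G2 : 'M[R]_K) :
  h^T = h -> M1^T = - M1 -> M2^T = - M2 -> h *m M2 = G2 ->
  \sum_(A : 'I_K) \sum_(B : 'I_K) h A B *:
     \matrix_(D, E) (- (- 2^-1 * (M1 A D - M1 D A)) * (- 2^-1 * (M2 B E - M2 E B)))
  = M1 *m G2.
Proof.
move=> hT M1T M2T HM2.
apply/matrixP => D E; rewrite summxE [RHS]mxE; apply: eq_bigr => A _.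
rewrite summxE -HM2 mxE mulr_sumr; apply: eq_bigr => B _; rewrite !mxE.
have e1 : M1 A D = - M1 D A by have := congr1 (fun X : 'M[R]_K => X D A) M1T; rewrite !mxE.
have e2 : M2 E B = - M2 B E by have := congr1 (fun X : 'M[R]_K => X B E) M2T; rewrite !mxE.
by rewrite e1 e2; field.
Qed.

Lemma claim_rr {R : realType} {n K : nat} (U : set 'rV[R]_n) (h : 'M[R]_K) (Gam : chris R n K) q p
  (i j : 'I_n) :
  h^T = h -> h \in unitmx -> metric_conn U h Gam -> U q ->
  (forall k A C, differentiable (Gam k A C) q) ->
  rbracket h Gam (rsec h Gam i) (rsec h Gam j) q p = 0.
Proof.
move=> hT hU mc Uq dG.
have mG := fun k => metric_mx k hT mc Uq.
have MT : forall k, (Mm h Gam k q)^T = - Mm h Gam k q.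
  by move=> k; rewrite /Mm HiT // Mt.
have HM : forall k, h *m Mm h Gam k q = Gm Gam k q by move=> k; rewrite /Mm HiT // mulKVmx.
rewrite /rbracket.
under eq_bigr => k _ do rewrite !nablaP_rsec wedge_scalr wedge_scall !ecoordE.
rewrite sumrB !sum_deltaV !nablaQ_rsec //.
under eq_bigr => k _ do under eq_bigr => l _ do rewrite !nablaP_rsec wedge_scalr wedge_scalr !ecoordE.
under eq_bigr => k _ do rewrite sum_deltaV.
rewrite sum_deltaV (sum3_F2 (invmx h) (fun A C => curv Gam C A i j q)) curv_form.
under eq_bigr => A _ do under eq_bigr => B _ do rewrite intj_rsec intl_rsec wedge_F1 -F2Z.
under eq_bigr => A _ do rewrite -F2_sum.
rewrite -F2_sum (T3_eq hT (MT i) (MT j) (HM j)).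
rewrite /Mm !HiT //.
rewrite !mulmxDr ?mulmxBr ?mulmxN !mulmxA (GtHi hT hU (mG i)) (GtHi hT hU (mG j)) !mulNmx.
rewrite -(MGt hT hU (mG i) (mG j)).
rewrite !F2D ?F2B !F2N F2_tr.
by apply/ffunP => W; rewrite !ffunE !scaleRE; field.
Qed.

Unset Implicit Arguments.

Theorem mainTheorem9 (R : realType) (n K : nat)
  (U : set 'rV[R]_n) (h : 'M[R]_K) (Gam : chris R n K) :
  open U ->
  h^T = h -> h \in unitmx ->
  (forall i A C q, U q -> differentiable (Gam i A C) q) ->
  metric_conn U h Gam ->
  forall q p : 'rV[R]_n, U q ->
    (forall i j : 'I_n,
        rbracket h Gam (qsec K i) (rsec h Gam j) q p = scal K ((i == j)%:R)) /\
    (forall A B : 'I_K,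
        rbracket h Gam (usec A) (usec B) q p = scal K (h A B)) /\
    (forall i j : 'I_n, rbracket h Gam (qsec K i) (qsec K j) q p = 0) /\
    (forall (i : 'I_n) (A : 'I_K), rbracket h Gam (qsec K i) (usec A) q p = 0) /\
    (forall i j : 'I_n, rbracket h Gam (rsec h Gam i) (rsec h Gam j) q p = 0) /\
    (forall (i : 'I_n) (A : 'I_K), rbracket h Gam (rsec h Gam i) (usec A) q p = 0).
Proof.
move=> _ hT hU dG mc q p Uq.
split; first by move=> i j; exact: claim_qr.
split; first by move=> A B; exact: claim_uu.
split; first by move=> i j; exact: claim_qq.
split; first by move=> i A; exact: claim_qu.
split; first by move=> i j; apply: (claim_rr p i j hT hU mc Uq) => k A C; exact: dG.
by move=> i A; exact: (claim_ru p i A hT hU mc Uq).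
Qed.
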